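(* Let $n \ge 1$, let $Q \ge 0$, let $\alpha \ge 0$, and let $q_1,\dots,q_n \ge 0$ be demands. Let $d_{i,i+1}$ ($1 \le i \le n-1$), $d_{0,i}$ and $d_{i,0}$ ($1 \le i \le n$) be real numbers. For $1 \le i \le n$ put $D[i] = \sum_{k=1}^{i-1} d_{k,k+1}$ and $Q[i] = \sum_{k=1}^{i} q_k$, with $Q[0]=0$. Let $\mathcal{G}$ be the directed acyclic graph with vertex set $\{0,1,\dots,n\}$ and an arc $(i,j)$ for every $0 \le i<j \le n$, with cost $$c(i,j) = d_{0,i+1} + D[j] - D[i+1] + d_{j,0} + \alpha \max\{Q[j]-Q[i]-Q,\,0\}.$$ Then there is an algorithm that computes a minimum-cost path from $0$ to $n$ in $\mathcal{G}$ (together with its cost) in $\mathcal{O}(n)$ time.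
   Context: This is the ''Split'' problem with soft capacity constraints for the vehicle routing problem: customers $1,\dots,n$ are given in a fixed order (a ''giant tour''), $d_{0,i}$ and $d_{i,0}$ are the distances from the depot to customer $i$ and back, $d_{i,i+1}$ is the distance between consecutive customers, and an arc $(i,j)$ represents a route leaving the depot, visiting customers $i+1,\dots,j$ in order and returning to the depot; exceeding the vehicle capacity $Q$ is allowed but penalized linearly with coefficient $\alpha$. Running time is measured in the model where arithmetic operations and comparisons on reals take constant time. *)

(* Defs.v *)
From Stdlib Require Import Reals List Arith Lia.
Import ListNotations.
Open Scope R_scope.

(* Customers are 1..n.  Input functions (only values on the relevant  *)
(* index ranges matter):                                              *)
(*   dn i   = d_{i,i+1}    (1 <= i <= n-1)                            *)
(*   dout i = d_{0,i}      (1 <= i <= n)                              *)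
(*   din i  = d_{i,0}      (1 <= i <= n)                              *)

Fixpoint sum_upto (f : nat -> R) (m : nat) : R :=
  match m with
  | O => 0
  | S m' => sum_upto f m' + f (S m')
  end.

Definition Dpre (dn : nat -> R) (i : nat) : R := sum_upto dn (i - 1).

Definition Qpre (q : nat -> R) (i : nat) : R := sum_upto q i.

Definition arc_cost (Qcap alpha : R) (q dn dout din : nat -> R) (i j : nat) : R :=
  dout (S i) + Dpre dn j - Dpre dn (S i) + din j
  + alpha * Rmax (Qpre q j - Qpre q i - Qcap) 0.

Fixpoint incr (s : list nat) : Prop :=
  match s with
  | x :: ((y :: _) as t) => (x < y)%nat /\ incr t
  | _ => True
  end.

Definition is_path (n : nat) (s : list nat) : Prop :=
  hd 1%nat s = 0%nat /\ last s 0%nat = n /\ s <> [] /\ incr s.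

Fixpoint path_cost (c : nat -> nat -> R) (s : list nat) : R :=
  match s with
  | x :: ((y :: _) as t) => c x y + path_cost c t
  | _ => 0
  end.

(* Real-RAM model of computation.                                     *)
(* Every instruction costs one time unit.  Arithmetic (+,-,* ) and    *)
(* comparisons on reals take constant time; there is no conversion    *)
(* from reals to integers (no floor).                                 *)
Inductive instr : Type :=
| RConst (d : nat) (z : Z)
| RAdd (d a b : nat)
| RSub (d a b : nat)
| RMul (d a b : nat)
| RLoad (d p : nat)
| RStore (p s : nat)
| RJle (a b l : nat)
| NConst (d k : nat)
| NAdd (d a b : nat)
| NSub (d a b : nat)
| NLoad (d p : nat)
| NStore (p s : nat)
| NJle (a b l : nat)
| Jmp (l : nat)
| Halt.

Record config : Type := Config { pc : nat; rm : nat -> R; nm : nat -> nat }.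

Definition updR (m : nat -> R) (a : nat) (v : R) : nat -> R :=
  fun x => if Nat.eqb x a then v else m x.
Definition updN (m : nat -> nat) (a : nat) (v : nat) : nat -> nat :=
  fun x => if Nat.eqb x a then v else m x.

Definition step (prog : list instr) (c : config) : option config :=
  let '(Config k r m) := c in
  let next := S k in
  match nth k prog Halt with
  | RConst d z => Some (Config next (updR r d (IZR z)) m)
  | RAdd d a b => Some (Config next (updR r d (r a + r b)) m)
  | RSub d a b => Some (Config next (updR r d (r a - r b)) m)
  | RMul d a b => Some (Config next (updR r d (r a * r b)) m)
  | RLoad d p => Some (Config next (updR r d (r (m p))) m)
  | RStore p s => Some (Config next (updR r (m p) (r s)) m)
  | RJle a b l =>
      Some (Config (if Rle_dec (r a) (r b) then l else next) r m)
  | NConst d x => Some (Config next r (updN m d x))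
  | NAdd d a b => Some (Config next r (updN m d (m a + m b)%nat))
  | NSub d a b => Some (Config next r (updN m d (m a - m b)%nat))
  | NLoad d p => Some (Config next r (updN m d (m (m p))))
  | NStore p s => Some (Config next r (updN m (m p) (m s)))
  | NJle a b l => Some (Config (if Nat.leb (m a) (m b) then l else next) r m)
  | Jmp l => Some (Config l r m)
  | Halt => None
  end.

Fixpoint exec (prog : list instr) (t : nat) (c : config) : config :=
  match t with
  | O => c
  | S t' => match step prog c with
            | None => c
            | Some c' => exec prog t' c'
            end
  end.

(* Input encoding: rm[0] = Q, rm[1] = alpha, and for 1 <= i <= n:
   rm[5i] = q_i, rm[5i+1] = d_{i,i+1} (0 if i = n), rm[5i+2] = d_{0,i},
   rm[5i+3] = d_{i,0}; all other real cells 0.  nm[0] = n, others 0. *)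
Definition input_rm (n : nat) (Qcap alpha : R) (q dn dout din : nat -> R)
  : nat -> R :=
  fun a =>
    if Nat.eqb a 0 then Qcap
    else if Nat.eqb a 1 then alpha
    else let i := Nat.div a 5 in
         if andb (Nat.leb 1 i) (Nat.leb i n) then
           match Nat.modulo a 5 with
           | 0 => q i
           | 1 => if Nat.ltb i n then dn i else 0
           | 2 => dout i
           | 3 => din i
           | _ => 0
           end
         else 0.

Definition input_nm (n : nat) : nat -> nat :=
  fun a => if Nat.eqb a 0 then n else 0%nat.

Definition init_config (n : nat) (Qcap alpha : R) (q dn dout din : nat -> R)
  : config := Config 0 (input_rm n Qcap alpha q dn dout din) (input_nm n).

(* Output convention: nm[1] = k (number of arcs), nm[2], ..., nm[k+2]
   are the path vertices p_0, ..., p_k, and rm[0] is the path's cost. *)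
Definition out_path (c : config) : list nat :=
  map (fun i => nm c (2 + i)) (seq 0 (S (nm c 1))).
Definition out_cost (c : config) : R := rm c 0.

(* Main.v *)
Require Import Defs.
From Stdlib Require Import Reals List Arith Lia Lra.
Import ListNotations.
Open Scope R_scope.

Definition prog : list instr := [
  NConst 14 1 (* 0 *);
  NConst 15 5 (* 1 *);
  NConst 18 2 (* 2 *);
  NConst 19 3 (* 3 *);
  NAdd 16 0 0 (* 4 *);
  NAdd 16 16 16 (* 5 *);
  NAdd 16 16 0 (* 6 *);
  NConst 20 10 (* 7 *);
  NAdd 24 16 20 (* 8 *);
  NAdd 25 24 0 (* 9 *);
  NAdd 25 25 18 (* 10 *);
  NAdd 26 25 0 (* 11 *);
  NAdd 26 26 18 (* 12 *);
  NAdd 27 26 0 (* 13 *);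
  NAdd 27 27 18 (* 14 *);
  NConst 20 100 (* 15 *);
  NAdd 28 0 20 (* 16 *);
  NAdd 12 28 0 (* 17 *);
  NAdd 12 12 14 (* 18 *);
  NAdd 13 12 30 (* 19 *);
  NAdd 11 0 30 (* 20 *);
  NSub 10 0 14 (* 21 *);
  NAdd 29 0 30 (* 22 *);
  NAdd 20 16 14 (* 23 *);
  RLoad 2 20 (* 24 *);
  NAdd 20 27 29 (* 25 *);
  NAdd 20 20 14 (* 26 *);
  RLoad 3 20 (* 27 *);
  RAdd 2 2 3 (* 28 *);
  NSub 20 20 14 (* 29 *);
  RStore 20 2 (* 30 *);
  NAdd 20 16 19 (* 31 *);
  RLoad 3 20 (* 32 *);
  RSub 3 3 2 (* 33 *);
  NAdd 20 26 29 (* 34 *);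
  RLoad 2 20 (* 35 *);
  RAdd 3 3 2 (* 36 *);
  NAdd 20 24 29 (* 37 *);
  RStore 20 3 (* 38 *);
  NJle 13 12 48 (* 39 *);
  NSub 20 13 14 (* 40 *);
  NLoad 21 20 (* 41 *);
  NAdd 20 24 21 (* 42 *);
  RLoad 2 20 (* 43 *);
  RJle 3 2 46 (* 44 *);
  Jmp 48 (* 45 *);
  NSub 13 13 14 (* 46 *);
  Jmp 39 (* 47 *);
  NStore 13 29 (* 48 *);
  NAdd 13 13 14 (* 49 *);
  NAdd 20 25 29 (* 50 *);
  RLoad 2 20 (* 51 *);
  RLoad 3 16 (* 52 *);
  RAdd 2 2 3 (* 53 *);
  NAdd 20 25 10 (* 54 *);
  RStore 20 2 (* 55 *);
  NJle 29 11 58 (* 56 *);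
  Jmp 76 (* 57 *);
  NAdd 20 25 10 (* 58 *);
  RLoad 2 20 (* 59 *);
  NAdd 20 25 11 (* 60 *);
  RLoad 3 20 (* 61 *);
  RAdd 3 3 0 (* 62 *);
  RJle 2 3 76 (* 63 *);
  RLoad 3 20 (* 64 *);
  RMul 3 1 3 (* 65 *);
  NAdd 20 24 11 (* 66 *);
  RLoad 2 20 (* 67 *);
  RSub 2 2 3 (* 68 *);
  NJle 0 11 71 (* 69 *);
  RJle 4 2 74 (* 70 *);
  RConst 4 0%Z (* 71 *);
  RAdd 4 4 2 (* 72 *);
  NAdd 22 11 30 (* 73 *);
  NSub 11 11 14 (* 74 *);
  Jmp 56 (* 75 *);
  NJle 13 12 81 (* 76 *);
  NLoad 21 12 (* 77 *);
  NJle 21 11 81 (* 78 *);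
  NAdd 12 12 14 (* 79 *);
  Jmp 76 (* 80 *);
  NJle 29 11 83 (* 81 *);
  Jmp 94 (* 82 *);
  NLoad 23 12 (* 83 *);
  NAdd 20 24 23 (* 84 *);
  RLoad 3 20 (* 85 *);
  NJle 0 11 101 (* 86 *);
  NAdd 20 25 10 (* 87 *);
  RLoad 2 20 (* 88 *);
  RSub 2 2 0 (* 89 *);
  RMul 2 1 2 (* 90 *);
  RAdd 2 2 4 (* 91 *);
  RJle 3 2 101 (* 92 *);
  Jmp 99 (* 93 *);
  NAdd 20 25 10 (* 94 *);
  RLoad 2 20 (* 95 *);
  RSub 2 2 0 (* 96 *);
  RMul 2 1 2 (* 97 *);
  RAdd 2 2 4 (* 98 *);
  NAdd 23 22 30 (* 99 *);
  Jmp 103 (* 100 *);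
  RConst 2 0%Z (* 101 *);
  RAdd 2 2 3 (* 102 *);
  NAdd 20 16 18 (* 103 *);
  RLoad 3 20 (* 104 *);
  RAdd 2 2 3 (* 105 *);
  NAdd 20 27 29 (* 106 *);
  RLoad 3 20 (* 107 *);
  RAdd 2 2 3 (* 108 *);
  NAdd 20 26 10 (* 109 *);
  RStore 20 2 (* 110 *);
  NAdd 20 28 10 (* 111 *);
  NStore 20 23 (* 112 *);
  NJle 10 30 118 (* 113 *);
  NSub 10 10 14 (* 114 *);
  NSub 29 29 14 (* 115 *);
  NSub 16 16 15 (* 116 *);
  Jmp 23 (* 117 *);
  RLoad 0 26 (* 118 *);
  NAdd 5 28 30 (* 119 *);
  NConst 4 1 (* 120 *);
  NConst 2 0 (* 121 *);
  NConst 3 3 (* 122 *);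
  NJle 0 2 149 (* 123 *);
  NAdd 1 2 5 (* 124 *);
  NLoad 2 1 (* 125 *);
  NSub 1 5 4 (* 126 *);
  NStore 1 2 (* 127 *);
  NConst 3 4 (* 128 *);
  NJle 0 2 149 (* 129 *);
  NAdd 1 2 5 (* 130 *);
  NLoad 2 1 (* 131 *);
  NConst 1 2 (* 132 *);
  NSub 1 5 1 (* 133 *);
  NStore 1 2 (* 134 *);
  NConst 3 5 (* 135 *);
  NJle 0 2 149 (* 136 *);
  NAdd 1 2 5 (* 137 *);
  NLoad 2 1 (* 138 *);
  NConst 1 3 (* 139 *);
  NSub 1 5 1 (* 140 *);
  NStore 1 2 (* 141 *);
  NConst 3 6 (* 142 *);
  NJle 0 2 149 (* 143 *);
  NAdd 1 2 5 (* 144 *);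
  NLoad 2 1 (* 145 *);
  NStore 3 2 (* 146 *);
  NAdd 3 3 4 (* 147 *);
  Jmp 143 (* 148 *);
  NConst 1 3 (* 149 *);
  NSub 0 3 1 (* 150 *);
  NSub 1 5 4 (* 151 *);
  NLoad 3 1 (* 152 *);
  NConst 4 2 (* 153 *);
  NSub 1 5 4 (* 154 *);
  NLoad 4 1 (* 155 *);
  NConst 2 3 (* 156 *);
  NSub 1 5 2 (* 157 *);
  NLoad 5 1 (* 158 *);
  NConst 2 0 (* 159 *);
  NAdd 1 0 2 (* 160 *);
  Halt (* 161 *)
].
(* L0 = 23 *)
(* Lpush = 39 *)
(* Lpop = 46 *)
(* Ldopush = 48 *)
(* Lhi = 56 *)
(* Lhic = 58 *)
(* Lfirst = 71 *)
(* Lskip = 74 *)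
(* Lhiend = 76 *)
(* Lbk = 76 *)
(* Lbkend = 81 *)
(* Lwin = 83 *)
(* Lrest = 94 *)
(* Lrestc = 99 *)
(* Lwinonly = 101 *)
(* Lfin = 103 *)
(* Lout = 118 *)
(* Ltr = 143 *)
(* Lend = 149 *)
(* Lhalt = 161 *)

Section Spec.
Variables (n : nat) (Qcap alpha : R) (q dn dout din : nat -> R).

Definition dn' (k : nat) : R := if (k <? n)%nat then dn k else 0.
Fixpoint sfrom (f : nat -> R) (m fuel : nat) : R :=
  match fuel with O => 0 | S f' => f m + sfrom f (S m) f' end.
Definition Tsp (m : nat) : R := sfrom q (S m) (n - m).
Definition Esp (m : nat) : R := sfrom dn' m (S n - m).

Lemma Tsp_S : forall m, (m < n)%nat -> Tsp m = q (S m) + Tsp (S m).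
Proof.
  intros m H. unfold Tsp. replace (n - m)%nat with (S (n - S m)) by lia. simpl. reflexivity.
Qed.
Lemma Tsp_n : Tsp n = 0.
Proof. unfold Tsp. rewrite Nat.sub_diag. reflexivity. Qed.
Lemma Esp_S : forall m, (m <= n)%nat -> Esp m = dn' m + Esp (S m).
Proof.
  intros m H. unfold Esp. replace (S n - m)%nat with (S (S n - S m)) by lia. simpl. reflexivity.
Qed.
Lemma Esp_Sn : Esp (S n) = 0.
Proof. unfold Esp. rewrite Nat.sub_diag. reflexivity. Qed.

Lemma Qpre_Tsp : forall j, (j <= n)%nat -> Qpre q j + Tsp j = Qpre q n.
Proof.
  intros j Hj. remember (n - j)%nat as d. revert j Hj Heqd.
  induction d as [|d IH]; intros j Hj Hd.
  - assert (j = n) by lia. subst. rewrite Tsp_n. ring.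
  - rewrite Tsp_S by lia. rewrite <- (IH (S j)) by lia.
    unfold Qpre. simpl. ring.
Qed.

Lemma Dpre_Esp : forall j, (1 <= j <= n)%nat -> Dpre dn j + Esp j = sum_upto dn (n - 1).
Proof.
  intros j Hj. remember (n - j)%nat as d. revert j Hj Heqd.
  induction d as [|d IH]; intros j Hj Hd.
  - assert (j = n) by lia. subst. rewrite Esp_S by lia. rewrite Esp_Sn.
    unfold dn'. rewrite Nat.ltb_irrefl. unfold Dpre. ring.
  - rewrite Esp_S by lia. rewrite <- (IH (S j)) by lia.
    unfold dn'. replace (j <? n)%nat with true by (symmetry; apply Nat.ltb_lt; lia).
    unfold Dpre. replace (S j - 1)%nat with (S (j - 1)) by lia. simpl sum_upto. replace (S (j - 1)) with j by lia. ring.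
Qed.

Definition cost := arc_cost Qcap alpha q dn dout din.

Lemma cost_eq : forall i j, (i < j)%nat -> (j <= n)%nat ->
  cost i j = dout (S i) + Esp (S i) + (din j - Esp j) + alpha * Rmax (Tsp i - Tsp j - Qcap) 0.
Proof.
  intros i j H1 H2. unfold cost, arc_cost.
  pose proof (Qpre_Tsp i ltac:(lia)) as A. pose proof (Qpre_Tsp j ltac:(lia)) as B.
  pose proof (Dpre_Esp (S i) ltac:(lia)) as C. pose proof (Dpre_Esp j ltac:(lia)) as D.
  replace (Qpre q j - Qpre q i - Qcap) with (Tsp i - Tsp j - Qcap) by lra.
  lra.
Qed.

Hypothesis Hq : forall i, (1 <= i <= n)%nat -> 0 <= q i.

Lemma Tsp_mono : forall j j', (j <= j')%nat -> (j' <= n)%nat -> Tsp j' <= Tsp j.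
Proof.
  intros j j' H1 H2. induction H1 as [|j' H1 IH].
  - lra.
  - rewrite Tsp_S in IH by lia. pose proof (Hq (S j') ltac:(lia)). specialize (IH ltac:(lia)). lra.
Qed.

Definition is_path_from (a : nat) (s : list nat) : Prop :=
  hd 1%nat s = a /\ last s 0%nat = n /\ s <> [] /\ incr s.
Definition OPT (a : nat) (x : R) : Prop :=
  forall s, is_path_from a s -> x <= path_cost cost s.

Lemma incr_hd_last : forall s a, incr (a :: s) -> (a <= last (a :: s) 0)%nat.
Proof.
  induction s as [|b s IH]; intros a H; simpl; auto.
  destruct H as [H1 H2]. specialize (IH b H2). simpl in IH. destruct s; lia.
Qed.

Lemma OPT_n : OPT n 0.
Proof.
  intros s [H1 [H2 [H3 H4]]]. destruct s as [|a s]; [congruence|]. simpl in H1. subst a.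
  destruct s as [|b s]; simpl; [lra|].
  destruct H4 as [H4 H5]. pose proof (incr_hd_last s b H5).
  simpl in H2. simpl in H. destruct s; lia.
Qed.

Lemma OPT_step : forall i best (Sv U : nat -> R),
  (i < n)%nat ->
  (forall j, (i < j <= n)%nat -> OPT j (Sv j)) ->
  (forall j, (i < j <= n)%nat -> U j = din j - Esp j + Sv j) ->
  (forall j, (i < j <= n)%nat -> best <= U j + alpha * Rmax (Tsp i - Tsp j - Qcap) 0) ->
  OPT i (dout (S i) + Esp (S i) + best).
Proof.
  intros i best Sv U Hi HO HU Hb s [H1 [H2 [H3 H4]]].
  destruct s as [|a s]; [congruence|]. simpl in H1. subst a.
  destruct s as [|j s]. { simpl in H2. lia. }
  destruct H4 as [H4 H5]. pose proof (incr_hd_last s j H5) as Hl.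
  assert (Hj : (last (j :: s) 0 = n)%nat) by (simpl in H2 |- *; destruct s; auto).
  assert (Hjn : (i < j <= n)%nat) by lia.
  change (path_cost cost (i :: j :: s)) with (cost i j + path_cost cost (j :: s)).
  assert (Hp : Sv j <= path_cost cost (j :: s)).
  { apply HO; auto. split; [reflexivity|]. split; auto. split; [congruence|auto]. }
  rewrite cost_eq by lia. specialize (Hb j Hjn). rewrite (HU j Hjn) in Hb. lra.
Qed.

Definition SB := (n + 100)%nat.
Fixpoint chainf (m : nat -> nat) (f : nat) (c : nat) : list nat :=
  match f with
  | O => [c]
  | S f' => if (c <? n)%nat then c :: chainf m f' (m (SB + c)%nat) else [c]
  end.
Definition chain m c := chainf m n c.
Definition SucOK (m : nat -> nat) (lo : nat) : Prop :=
  forall j, (lo <= j < n)%nat -> (j < m (SB + j) <= n)%nat.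

Lemma chainf_fuel : forall m lo, SucOK m lo -> forall f f' c, (lo <= c <= n)%nat ->
  (n - c <= f)%nat -> (n - c <= f')%nat -> chainf m f c = chainf m f' c.
Proof.
  intros m lo Hs f. induction f as [|f IH]; intros f' c Hc H1 H2.
  - assert (c = n) by lia. subst. destruct f'; simpl; auto. rewrite Nat.ltb_irrefl. auto.
  - simpl. destruct (Nat.ltb_spec c n).
    + destruct f' as [|f']; [lia|]. simpl. rewrite (proj2 (Nat.ltb_lt c n)) by auto.
      f_equal. pose proof (Hs c ltac:(lia)). apply IH; lia.
    + destruct f'; simpl; auto. rewrite (proj2 (Nat.ltb_ge c n)) by auto. auto.
Qed.

Lemma chainf_S : forall m f c, (c < n)%nat -> chainf m (S f) c = c :: chainf m f (m (SB + c)%nat).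
Proof. intros m f c H. simpl. rewrite (proj2 (Nat.ltb_lt c n)) by auto. auto. Qed.

Lemma chain_cons : forall m lo c, SucOK m lo -> (lo <= c < n)%nat ->
  chain m c = c :: chain m (m (SB + c)%nat).
Proof.
  intros m lo c Hs Hc. unfold chain.
  rewrite (chainf_fuel m lo Hs n (S (n - 1)) c) by lia. rewrite chainf_S by lia. f_equal.
  pose proof (Hs c ltac:(lia)). apply (chainf_fuel m lo Hs); lia.
Qed.

Lemma chainf_n : forall m f, chainf m f n = [n].
Proof. intros m f. destruct f; simpl; auto. rewrite Nat.ltb_irrefl. auto. Qed.

Lemma chain_n : forall m, chain m n = [n].
Proof. intros m. apply chainf_n. Qed.

Lemma chain_hd : forall m c, exists t, chain m c = c :: t.
Proof. intros m c. unfold chain. generalize n at 1. intros f. destruct f; simpl; eauto. destruct (c <? n)%nat; eauto. Qed.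

Lemma chain_ext : forall m m' lo, SucOK m lo ->
  (forall j, (lo <= j < n)%nat -> m' (SB + j)%nat = m (SB + j)%nat) ->
  forall c, (lo <= c <= n)%nat -> chain m' c = chain m c.
Proof.
  intros m m' lo Hs He c Hc. unfold chain.
  assert (G : forall f c, (lo <= c <= n)%nat -> chainf m' f c = chainf m f c).
  { intros f. induction f as [|f IH]; intros c' Hc'; simpl; auto.
    destruct (Nat.ltb_spec c' n); auto. rewrite He by lia. f_equal.
    pose proof (Hs c' ltac:(lia)). apply IH; lia. }
  apply G; auto.
Qed.

Lemma SucOK_ext : forall m m' lo, SucOK m lo ->
  (forall j, (lo <= j < n)%nat -> m' (SB + j)%nat = m (SB + j)%nat) -> SucOK m' lo.
Proof. intros m m' lo Hs He j Hj. rewrite He by lia. auto. Qed.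

Lemma chain_path : forall m lo, SucOK m lo -> forall c, (lo <= c <= n)%nat ->
  is_path_from c (chain m c).
Proof.
  intros m lo Hs c Hc. remember (n - c)%nat as d. revert c Hc Heqd.
  induction d as [d IH] using lt_wf_ind; intros c Hc Hd.
  destruct (Nat.eq_dec c n) as [E|E].
  - subst. rewrite chain_n. repeat split; simpl; auto; try congruence.
  - rewrite (chain_cons m lo c Hs) by lia. pose proof (Hs c ltac:(lia)) as Hc'.
    assert (IH' := IH (n - m (SB + c))%nat ltac:(lia) (m (SB + c)%nat) ltac:(lia) eq_refl).
    destruct IH' as [A [B [C D]]].
    destruct (chain_hd m (m (SB + c)%nat)) as [t Ht]. rewrite Ht in *.
    repeat split; simpl; auto; try congruence.
    all: try (simpl in B; destruct t; auto).
    all: try lia.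
Qed.

Lemma chain_cost : forall m lo c, SucOK m lo -> (lo <= c < n)%nat ->
  path_cost cost (chain m c) = cost c (m (SB + c)%nat) + path_cost cost (chain m (m (SB + c)%nat)).
Proof.
  intros m lo c Hs Hc. rewrite (chain_cons m lo c Hs Hc).
  destruct (chain_hd m (m (SB + c)%nat)) as [t Ht]. rewrite Ht. reflexivity.
Qed.

End Spec.

Lemma exec_add : forall p a b c, exec p (a + b) c = exec p b (exec p a c).
Proof.
  intros p a; induction a as [|a IH]; intros b c; simpl; auto.
  destruct (step p c) eqn:E; auto.
  destruct b; simpl; auto. rewrite E. auto.
Qed.

Lemma updR_eq : forall r a v x, x = a -> updR r a v x = v.
Proof. intros; subst; unfold updR; rewrite Nat.eqb_refl; auto. Qed.
Lemma updR_ne : forall r a v x, x <> a -> updR r a v x = r x.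
Proof. intros; unfold updR; destruct (Nat.eqb_spec x a); congruence. Qed.
Lemma updN_eq : forall r a v x, x = a -> updN r a v x = v.
Proof. intros; subst; unfold updN; rewrite Nat.eqb_refl; auto. Qed.
Lemma updN_ne : forall r a v x, x <> a -> updN r a v x = r x.
Proof. intros; unfold updN; destruct (Nat.eqb_spec x a); congruence. Qed.
Lemma input_nm_0 : forall n x, x = 0%nat -> input_nm n x = n.
Proof. intros; subst; reflexivity. Qed.
Lemma input_nm_ne : forall n x, x <> 0%nat -> input_nm n x = 0%nat.
Proof. intros; unfold input_nm; destruct (Nat.eqb_spec x 0); congruence. Qed.

Section Machine.
Variables (n : nat) (Qcap alpha : R) (q dn dout din : nat -> R).

Definition Final (c : config) : Prop :=
  is_path n (out_path c) /\
  out_cost c = path_cost (cost Qcap alpha q dn dout din) (out_path c) /\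
  (forall s, is_path n s -> path_cost (cost Qcap alpha q dn dout din) (out_path c)
                            <= path_cost (cost Qcap alpha q dn dout din) s).

Definition Good (c : config) (B : nat) : Prop :=
  exists t, (t <= B)%nat /\ step prog (exec prog t c) = None /\ Final (exec prog t c).

Lemma run1 : forall c c' B, step prog c = Some c' -> Good c' (B - 1) -> (1 <= B)%nat -> Good c B.
Proof.
  intros c c' B E [t [Ht [H1 H2]]] HB. exists (S t). split; [lia|].
  simpl. rewrite E. auto.
Qed.

Lemma good_mono : forall c B B', Good c B -> (B <= B')%nat -> Good c B'.
Proof. intros c B B' [t [Ht H]] Hle. exists t. split; [lia|auto]. Qed.

Lemma good_halt : forall c B, step prog c = None -> Final c -> Good c B.
Proof. intros c B H1 H2. exists 0%nat. split; [lia|]. simpl. auto. Qed.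

End Machine.

Definition agree {A} (m m0 : nat -> A) (L : list nat) : Prop :=
  forall x, ~ In x L -> m x = m0 x.

Lemma agree_updR : forall (m m0 : nat -> R) L a v, agree m m0 L -> In a L -> agree (updR m a v) m0 L.
Proof. intros m m0 L a v H Ha x Hx. rewrite updR_ne by (intro; subst; auto). auto. Qed.
Lemma agree_updN : forall (m m0 : nat -> nat) L a v, agree m m0 L -> In a L -> agree (updN m a v) m0 L.
Proof. intros m m0 L a v H Ha x Hx. rewrite updN_ne by (intro; subst; auto). auto. Qed.
Lemma agree_refl : forall A (m : nat -> A) L, agree m m L.
Proof. intros A m L x _. auto. Qed.
Lemma agree_trans : forall A (m1 m2 m3 : nat -> A) L1 L2 L, agree m1 m2 L1 -> agree m2 m3 L2 ->
  (forall x, In x L1 \/ In x L2 -> In x L) -> agree m1 m3 L.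
Proof.
  intros A m1 m2 m3 L1 L2 L H1 H2 H x Hx. rewrite H1, H2; auto.
Qed.

Lemma nth_hd_skipn : forall (P : list nat) l d, nth l P d = hd d (skipn l P).
Proof. induction P as [|a P IH]; intros l d; destruct l; simpl; auto. Qed.

Lemma skipn_S_cons : forall (P : list nat) l a t, skipn l P = a :: t -> skipn (S l) P = t.
Proof.
  induction P as [|b P IH]; intros l a t H; destruct l; simpl in *; try discriminate.
  - injection H; intros; subst; auto.
  - eapply IH; eauto.
Qed.

Lemma skipn_len1 : forall (P : list nat) l a, skipn l P = [a] -> length P = S l.
Proof.
  induction P as [|b P IH]; intros l a H; destruct l; simpl in *; try discriminate.
  - injection H; intros; subst; auto.
  - f_equal. eapply IH; eauto.
Qed.

Lemma map_seq_nth : forall (f : nat -> nat) (P : list nat) len,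
  length P = len -> (forall x, (x < len)%nat -> f x = nth x P 0%nat) -> map f (seq 0 len) = P.
Proof.
  intros f P len HL Hf. apply nth_ext with (d := 0%nat) (d' := 0%nat).
  - rewrite length_map, length_seq. auto.
  - intros x Hx. rewrite length_map, length_seq in Hx.
    rewrite nth_indep with (d' := f 0%nat) by (rewrite length_map, length_seq; auto).
    rewrite map_nth, seq_nth by auto. simpl. apply Hf. auto.
Qed.

Lemma agree_weak : forall A (m m0 : nat -> A) L L', agree m m0 L -> (forall x, In x L -> In x L') -> agree m m0 L'.
Proof. intros A m m0 L L' H Hi x Hx. apply H. intro; apply Hx; auto. Qed.

Section Inp.
Variables (n : nat) (Qcap alpha : R) (q dn dout din : nat -> R).

Lemma div5 : forall b o, (o < 5)%nat -> ((5 * b + o) / 5 = b)%nat.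
Proof.
  intros b o H. rewrite (Nat.mul_comm 5 b). rewrite Nat.div_add_l by lia.
  rewrite Nat.div_small by lia. lia.
Qed.
Lemma mod5 : forall b o, (o < 5)%nat -> ((5 * b + o) mod 5 = o)%nat.
Proof.
  intros b o H. pose proof (Nat.div_mod_eq (5 * b + o) 5) as E. rewrite div5 in E by auto. lia.
Qed.

Lemma inp_blk : forall b o, (1 <= b <= n)%nat -> (o < 5)%nat ->
  input_rm n Qcap alpha q dn dout din (5 * b + o) =
  match o with 0 => q b | 1 => dn' n dn b | 2 => dout b | 3 => din b | _ => 0 end.
Proof.
  intros b o Hb Ho. unfold input_rm.
  replace (5 * b + o =? 0)%nat with false by (symmetry; apply Nat.eqb_neq; lia).
  replace (5 * b + o =? 1)%nat with false by (symmetry; apply Nat.eqb_neq; lia).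
  rewrite div5, mod5 by auto.
  replace ((1 <=? b) && (b <=? n))%bool with true
    by (symmetry; apply andb_true_intro; split; apply Nat.leb_le; lia).
  destruct o as [|[|[|[|o]]]]; auto.
Qed.

Lemma inp_high : forall x, (5 * n + 5 <= x)%nat -> input_rm n Qcap alpha q dn dout din x = 0.
Proof.
  intros x Hx. unfold input_rm.
  replace (x =? 0)%nat with false by (symmetry; apply Nat.eqb_neq; lia).
  replace (x =? 1)%nat with false by (symmetry; apply Nat.eqb_neq; lia).
  assert (n + 1 <= x / 5)%nat.
  { apply Nat.div_le_lower_bound; lia. }
  replace (x / 5 <=? n)%nat with false by (symmetry; apply Nat.leb_gt; lia).
  rewrite Bool.andb_false_r. auto.
Qed.

Lemma inp_0 : input_rm n Qcap alpha q dn dout din 0 = Qcap.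
Proof. reflexivity. Qed.
Lemma inp_1 : input_rm n Qcap alpha q dn dout din 1 = alpha.
Proof. reflexivity. Qed.
End Inp.
Ltac sl := simpl; lia.

Ltac simp1 :=
  match goal with
  | |- context [updR ?r ?a ?v ?x] =>
      first [ rewrite (updR_eq r a v x) by sl
            | rewrite (updR_ne r a v x) by sl ]
  | |- context [updN ?r ?a ?v ?x] =>
      first [ rewrite (updN_eq r a v x) by sl
            | rewrite (updN_ne r a v x) by sl ]
  | |- context [input_nm ?n ?x] =>
      first [ rewrite (input_nm_0 n x) by sl
            | rewrite (input_nm_ne n x) by sl ]
  | H : ?m ?x = ?v |- context [?m ?x] => is_var m; rewrite H
  | H : agree ?m ?m0 ?L |- context [?m ?y] => rewrite (H y) by (unfold In; lia)
  | |- context [(S ?x - 1)%nat] => replace (S x - 1)%nat with x by lia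
  | |- context [(?x + 0)%nat] => rewrite (Nat.add_0_r x)
  end.
Ltac simp_mem := repeat simp1.

Ltac simp_leb :=
  repeat match goal with
  | |- context [Nat.leb ?a ?b] =>
     first [ rewrite (proj2 (Nat.leb_le a b)) by lia
           | rewrite (proj2 (Nat.leb_gt a b)) by lia ]
  end.

Ltac stp :=
  match goal with
  | |- Good _ _ _ _ _ _ _ (Config _ _ _) _ =>
    eapply run1; [ cbv [step prog nth]; reflexivity | simp_mem; simp_leb | lia ]
  end.
Ltac stps := repeat stp.

Ltac agr :=
  repeat (first [apply agree_updN | apply agree_updR]; [| simpl; intuition lia]);
  try assumption; try apply agree_refl;
  try (eapply agree_weak; [eassumption | simpl; intuition lia]).

Ltac lk H j := match goal with |- context [?r ?x] => rewrite (H x j) by (try reflexivity; lia) end.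

Ltac lk3 H b o := match goal with |- context [?r ?x] => rewrite (H x b o) by (try reflexivity; lia) end.

Section Alg.
Variables (n : nat) (Qcap alpha : R) (q dn dout din : nat -> R).
Hypothesis Hn : (1 <= n)%nat.
Hypothesis HQ : 0 <= Qcap.
Hypothesis Ha : 0 <= alpha.
Hypothesis Hq : forall i, (1 <= i <= n)%nat -> 0 <= q i.

Local Notation BU := (5 * n + 10)%nat.
Local Notation BT := (6 * n + 12)%nat.
Local Notation BS := (7 * n + 14)%nat.
Local Notation BE := (8 * n + 16)%nat.
Local Notation DQ0 := (2 * n + 101)%nat.
Local Notation Tsp := (Tsp n q).
Local Notation Esp := (Esp n dn).
Local Notation dn' := (dn' n dn).
Local Notation cost := (cost Qcap alpha q dn dout din).
Local Notation chain := (chain n).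
Local Notation SucOK := (SucOK n).
Local Notation OPT := (OPT n Qcap alpha q dn dout din).
Local Notation Good := (Good n Qcap alpha q dn dout din).

Definition DQ (lo hi bp fp : nat) (r : nat -> R) (m : nat -> nat) : Prop :=
  (forall a, (bp <= a < fp)%nat -> (lo <= m a <= hi)%nat) /\
  (forall a a', (bp <= a)%nat -> (a < a')%nat -> (a' < fp)%nat ->
      (m a' < m a)%nat /\ r (BU + m a)%nat <= r (BU + m a')%nat) /\
  (forall j, (lo <= j <= hi)%nat -> exists a, (bp <= a < fp)%nat /\ (m a <= j)%nat /\
      r (BU + m a)%nat <= r (BU + j)%nat).

Definition Vv (r : nat -> R) (j : nat) : R := r (BU + j)%nat - alpha * Tsp j.

Definition RestF (hi : nat) (v : R) (j22 : nat) (r : nat -> R) : Prop :=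
  (hi < n)%nat -> ((hi < j22 <= n)%nat /\ v = Vv r j22 /\
     forall j, (hi < j <= n)%nat -> Vv r j22 <= Vv r j).

Record INV (i hi bp fp : nat) (r : nat -> R) (m : nat -> nat) : Prop := mkINV {
  h0 : m 0%nat = n; h10 : m 10%nat = i; h29 : m 29%nat = S i; h16 : m 16%nat = (5 * S i)%nat;
  h11 : m 11%nat = hi; h12 : m 12%nat = bp; h13 : m 13%nat = fp;
  h14 : m 14%nat = 1%nat; h15 : m 15%nat = 5%nat; h18 : m 18%nat = 2%nat; h19 : m 19%nat = 3%nat;
  h24 : m 24%nat = BU; h25 : m 25%nat = BT; h26 : m 26%nat = BS; h27 : m 27%nat = BE;
  h28 : m 28%nat = (n + 100)%nat; h30 : m 30%nat = 0%nat;
  hr0 : r 0%nat = Qcap; hr1 : r 1%nat = alpha;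
  hrng : (S i <= hi <= n)%nat; hdq0 : (DQ0 <= bp <= fp)%nat;
  hinp : forall x b o, x = (5 * b + o)%nat -> (1 <= b <= S i)%nat -> (o < 4)%nat ->
     r x = match o with 0 => q b | 1 => dn' b | 2 => dout b | _ => din b end;
  hT : forall x j, x = (BT + j)%nat -> (S i <= j <= n)%nat -> r x = Tsp j;
  hE : forall x j, x = (BE + j)%nat -> (S i < j <= S n)%nat -> r x = Esp j;
  hS : forall x j, x = (BS + j)%nat -> (S i <= j <= n)%nat ->
     r x = path_cost cost (chain m j) /\ OPT j (r x);
  hU : forall x j, x = (BU + j)%nat -> (S i < j <= n)%nat -> r x = din j - Esp j + r (BS + j)%nat;
  hsuc : SucOK m (S i);
  hrest : RestF hi (r 4%nat) (m 22%nat) r;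
  hwin : forall j, (hi < j <= n)%nat -> Tsp j + Qcap < Tsp (S i);
  hdq : DQ (S (S i)) hi bp fp r m }.

Definition Bud (i hi bp fp : nat) : nat := (100 * S i + 8 * (fp - bp) + 19 * (hi - i) + 6 * n + 80)%nat.


Record INVA (i hi bp fp : nat) (r : nat -> R) (m : nat -> nat) : Prop := mkINVA {
  a0 : m 0%nat = n; a10 : m 10%nat = i; a29 : m 29%nat = S i; a16 : m 16%nat = (5 * S i)%nat;
  a11 : m 11%nat = hi; a12 : m 12%nat = bp; a13 : m 13%nat = fp;
  a14 : m 14%nat = 1%nat; a15 : m 15%nat = 5%nat; a18 : m 18%nat = 2%nat; a19 : m 19%nat = 3%nat;
  a24 : m 24%nat = BU; a25 : m 25%nat = BT; a26 : m 26%nat = BS; a27 : m 27%nat = BE;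
  a28 : m 28%nat = (n + 100)%nat; a30 : m 30%nat = 0%nat;
  ar0 : r 0%nat = Qcap; ar1 : r 1%nat = alpha;
  arng : (S i <= hi <= n)%nat; adq0 : (DQ0 <= bp < fp)%nat;
  ainp : forall x b o, x = (5 * b + o)%nat -> (1 <= b <= S i)%nat -> (o < 4)%nat ->
     r x = match o with 0 => q b | 1 => dn' b | 2 => dout b | _ => din b end;
  aT : forall x j, x = (BT + j)%nat -> (i <= j <= n)%nat -> r x = Tsp j;
  aE : forall x j, x = (BE + j)%nat -> (S i <= j <= S n)%nat -> r x = Esp j;
  aS : forall x j, x = (BS + j)%nat -> (S i <= j <= n)%nat ->
     r x = path_cost cost (chain m j) /\ OPT j (r x);
  aU : forall x j, x = (BU + j)%nat -> (S i <= j <= n)%nat -> r x = din j - Esp j + r (BS + j)%nat;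
  asuc : SucOK m (S i);
  arest : RestF hi (r 4%nat) (m 22%nat) r;
  awin : forall j, (hi < j <= n)%nat -> Tsp j + Qcap < Tsp (S i);
  adq : DQ (S i) hi bp fp r m }.

Record INVB (i hi bp fp : nat) (r : nat -> R) (m : nat -> nat) : Prop := mkINVB {
  b0 : m 0%nat = n; b10 : m 10%nat = i; b29 : m 29%nat = S i; b16 : m 16%nat = (5 * S i)%nat;
  b11 : m 11%nat = hi; b12 : m 12%nat = bp; b13 : m 13%nat = fp;
  b14 : m 14%nat = 1%nat; b15 : m 15%nat = 5%nat; b18 : m 18%nat = 2%nat; b19 : m 19%nat = 3%nat;
  b24 : m 24%nat = BU; b25 : m 25%nat = BT; b26 : m 26%nat = BS; b27 : m 27%nat = BE;
  b28 : m 28%nat = (n + 100)%nat; b30 : m 30%nat = 0%nat;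
  br0 : r 0%nat = Qcap; br1 : r 1%nat = alpha;
  brng : (i <= hi <= n)%nat; bin : (S i <= n)%nat; bdq0 : (DQ0 <= bp <= fp)%nat;
  binp : forall x b o, x = (5 * b + o)%nat -> (1 <= b <= S i)%nat -> (o < 4)%nat ->
     r x = match o with 0 => q b | 1 => dn' b | 2 => dout b | _ => din b end;
  bT : forall x j, x = (BT + j)%nat -> (i <= j <= n)%nat -> r x = Tsp j;
  bE : forall x j, x = (BE + j)%nat -> (S i <= j <= S n)%nat -> r x = Esp j;
  bS : forall x j, x = (BS + j)%nat -> (S i <= j <= n)%nat ->
     r x = path_cost cost (chain m j) /\ OPT j (r x);
  bU : forall x j, x = (BU + j)%nat -> (S i <= j <= n)%nat -> r x = din j - Esp j + r (BS + j)%nat;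
  bsuc : SucOK m (S i);
  brest : RestF hi (r 4%nat) (m 22%nat) r;
  bwin : forall j, (hi < j <= n)%nat -> Tsp j + Qcap < Tsp i;
  bwin2 : forall j, (S i <= j <= hi)%nat -> Tsp i <= Tsp j + Qcap;
  bdq : DQ (S i) hi bp fp r m }.

Definition BF (i hi bp fp : nat) : nat := (100 * i + 8 * (fp - bp) + 19 * (hi - i) + 6 * n + 114)%nat.
Definition BB (i hi bp fp : nat) : nat := (BF i hi bp fp + 14)%nat.
Definition BA (i hi bp fp : nat) : nat := (100 * i + 8 * (fp - bp) + 19 * (hi - i) + 6 * n + 138)%nat.

Lemma RestF_ext : forall hi v j22 (r r' : nat -> R),
  (forall j, (hi < j <= n)%nat -> r' (BU + j)%nat = r (BU + j)%nat) ->
  RestF hi v j22 r -> RestF hi v j22 r'.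
Proof.
  intros hi v j22 r r' He H Hc. destruct (H Hc) as [A [B C]]. unfold Vv in *.
  split; auto. rewrite !He by lia. split; auto. intros j Hj. rewrite !He by lia. apply C; auto.
Qed.

Lemma DQ_ext : forall lo hi bp fp (r r' : nat -> R) (m m' : nat -> nat),
  (forall a, (bp <= a < fp)%nat -> m' a = m a) ->
  (forall j, (lo <= j <= hi)%nat -> r' (BU + j)%nat = r (BU + j)%nat) ->
  DQ lo hi bp fp r m -> DQ lo hi bp fp r' m'.
Proof.
  intros lo hi bp fp r r' m m' Hm Hr [A [B C]]. split; [|split].
  - intros a Haa. rewrite Hm by lia. auto.
  - intros a a' H1 H2 H3. rewrite !Hm by lia. pose proof (A a ltac:(lia)). pose proof (A a' ltac:(lia)).
    rewrite !Hr by lia. apply B; lia.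
  - intros j Hj. destruct (C j Hj) as [a [Ha1 [Ha2 Ha3]]]. exists a. rewrite Hm by lia.
    pose proof (A a ltac:(lia)). rewrite !Hr by lia. auto.
Qed.

Ltac introB HB :=
  pose proof (b0 _ _ _ _ _ _ HB); pose proof (b10 _ _ _ _ _ _ HB); pose proof (b29 _ _ _ _ _ _ HB); pose proof (b16 _ _ _ _ _ _ HB);
  pose proof (b11 _ _ _ _ _ _ HB); pose proof (b12 _ _ _ _ _ _ HB); pose proof (b13 _ _ _ _ _ _ HB); pose proof (b14 _ _ _ _ _ _ HB);
  pose proof (b15 _ _ _ _ _ _ HB); pose proof (b18 _ _ _ _ _ _ HB); pose proof (b19 _ _ _ _ _ _ HB); pose proof (b24 _ _ _ _ _ _ HB);
  pose proof (b25 _ _ _ _ _ _ HB); pose proof (b26 _ _ _ _ _ _ HB); pose proof (b27 _ _ _ _ _ _ HB); pose proof (b28 _ _ _ _ _ _ HB);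
  pose proof (b30 _ _ _ _ _ _ HB); pose proof (br0 _ _ _ _ _ _ HB); pose proof (br1 _ _ _ _ _ _ HB);
  pose proof (brng _ _ _ _ _ _ HB) as Xrng; pose proof (bin _ _ _ _ _ _ HB) as Xin; pose proof (bdq0 _ _ _ _ _ _ HB) as Xdq0;
  pose proof (binp _ _ _ _ _ _ HB) as Xinp; pose proof (bT _ _ _ _ _ _ HB) as XT; pose proof (bE _ _ _ _ _ _ HB) as XE;
  pose proof (bS _ _ _ _ _ _ HB) as XS; pose proof (bU _ _ _ _ _ _ HB) as XU; pose proof (bsuc _ _ _ _ _ _ HB) as Xsuc;
  pose proof (brest _ _ _ _ _ _ HB) as Xrest; pose proof (bwin _ _ _ _ _ _ HB) as Xwin; pose proof (bwin2 _ _ _ _ _ _ HB) as Xwin2;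
  pose proof (bdq _ _ _ _ _ _ HB) as Xdq.

Lemma push_loop : forall (hi bp fp0 : nat) (r0 : nat -> R) (m0 : nat -> nat) (uk : R) (B : nat),
  (forall fp r m, m 13%nat = fp -> m 12%nat = bp -> m 14%nat = 1%nat -> m 24%nat = BU -> r 3%nat = uk ->
     agree m m0 [13;20;21]%nat -> agree r r0 [2%nat] -> (bp <= fp <= fp0)%nat ->
     (forall a, (fp <= a < fp0)%nat -> uk <= r0 (BU + m0 a)%nat) ->
     (fp = bp \/ ((bp < fp)%nat /\ r0 (BU + m0 (fp - 1))%nat < uk)) ->
     Good (Config 48 r m) (B + 8 * (fp - bp))) ->
  (DQ0 <= bp)%nat ->
  forall fp r m, m 13%nat = fp -> m 12%nat = bp -> m 14%nat = 1%nat -> m 24%nat = BU -> r 3%nat = uk ->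
     agree m m0 [13;20;21]%nat -> agree r r0 [2%nat] -> (bp <= fp <= fp0)%nat ->
     (forall a, (fp <= a < fp0)%nat -> uk <= r0 (BU + m0 a)%nat) ->
     Good (Config 39 r m) (B + 8 * (fp - bp) + 7).
Proof.
  intros hi bp fp0 r0 m0 uk B Hcont Hbp fp.
  induction fp as [|fp IH]; intros r m H13 H12 H14 H24 H3 Agm Agr Hfp Hpop; [lia|].
  stp.
  destruct (Nat.leb_spec (S fp) bp).
  - eapply good_mono; [apply (Hcont (S fp) r m); auto; lia | lia].
  - do 5 stp.
    destruct (Rle_dec _ _) as [Hle|Hgt].
    + do 2 stp.
      eapply good_mono; [apply (IH _ _ ) | lia]; simp_mem; try lia; try agr.
      all: try reflexivity. intros a Haa. destruct (Nat.eq_dec a fp); [subst; auto|]. apply Hpop; lia.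
    + stp. eapply good_mono; [apply (Hcont (S fp) _ _ ) | lia]; simp_mem; try lia; try agr; auto.
      right. split; [lia|]. replace (S fp - 1)%nat with fp by lia. lra.
Qed.

Lemma hi_loop : forall (i hi0 : nat) (r0 : nat -> R) (m0 : nat -> nat) (B : nat),
  m0 29%nat = S i -> m0 10%nat = i -> m0 25%nat = BT -> m0 24%nat = BU -> m0 0%nat = n ->
  m0 14%nat = 1%nat -> m0 30%nat = 0%nat -> r0 0%nat = Qcap -> r0 1%nat = alpha ->
  (forall x j, x = (BT + j)%nat -> (i <= j <= n)%nat -> r0 x = Tsp j) ->
  (hi0 <= n)%nat ->
  (forall hi r m, m 11%nat = hi -> agree m m0 [11;20;22]%nat -> agree r r0 [2;3;4]%nat ->
     (i <= hi <= hi0)%nat -> (forall j, (hi < j <= n)%nat -> Tsp j + Qcap < Tsp i) ->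
     RestF hi (r 4%nat) (m 22%nat) r0 ->
     (hi = i \/ ((i < hi)%nat /\ Tsp i <= Tsp hi + Qcap)) ->
     Good (Config 76 r m) (B + 19 * (hi - i))) ->
  forall hi r m, m 11%nat = hi -> agree m m0 [11;20;22]%nat -> agree r r0 [2;3;4]%nat ->
     (i <= hi <= hi0)%nat -> (forall j, (hi < j <= n)%nat -> Tsp j + Qcap < Tsp i) ->
     RestF hi (r 4%nat) (m 22%nat) r0 ->
     Good (Config 56 r m) (B + 19 * (hi - i) + 7).
Proof.
  intros i hi0 r0 m0 B E29 E10 E25 E24 E0 E14 E30 E0r E1r HT Hhi0 Hcont hi.
  induction hi as [|hi IH]; intros r m H11 Agm Agr Hhi Hwin Hrest.
  - stp. stp. eapply good_mono; [apply (Hcont 0%nat r m); auto; lia|lia].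
  - stp. destruct (Nat.leb_spec (S i) (S hi)).
    2: { stp. eapply good_mono; [apply (Hcont (S hi) r m); auto; lia|lia]. }
    do 6 stp. lk HT i. lk HT (S hi).
    destruct (Rle_dec _ _) as [Hle|Hgt].
    { eapply good_mono; [apply (Hcont (S hi) _ _); simp_mem; auto; try lia; try agr|lia]. }
    do 6 stp. lk HT (S hi).
    assert (Hw : forall j, (hi < j <= n)%nat -> Tsp j + Qcap < Tsp i).
    { intros j Hj. destruct (Nat.eq_dec j (S hi)); [subst; lra|]. apply Hwin; lia. }
    destruct (Nat.leb_spec n (S hi)).
    + do 5 stp. eapply good_mono; [apply (IH _ _); simp_mem; auto; try lia; try agr|lia].
      intros Hc. split; [lia|]. unfold Vv. split; [lra|].
      intros j Hj. assert (j = S hi) by lia. subst. lra.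
    + stp. destruct (Rle_dec _ _) as [Hle2|Hgt2].
      * do 2 stp. eapply good_mono; [apply (IH _ _); simp_mem; auto; try lia; try agr|lia].
        intros Hc. destruct (Hrest ltac:(lia)) as [A [B1 C]]. split; [lia|]. split; [auto|].
        intros j Hj. destruct (Nat.eq_dec j (S hi)).
        -- subst j. unfold Vv at 2. lra.
        -- apply C. lia.
      * do 5 stp. eapply good_mono; [apply (IH _ _); simp_mem; auto; try lia; try agr|lia].
        intros Hc. destruct (Hrest ltac:(lia)) as [A [B1 C]]. split; [lia|]. unfold Vv. split; [lra|].
        intros j Hj. destruct (Nat.eq_dec j (S hi)).
        -- subst j. lra.
        -- specialize (C j ltac:(lia)). unfold Vv in *. lra.
Qed.

Lemma back_loop : forall (hi fp bp0 : nat) (r : nat -> R) (m0 : nat -> nat) (B : nat),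
  m0 11%nat = hi -> m0 13%nat = fp -> m0 14%nat = 1%nat -> (DQ0 <= bp0)%nat ->
  (forall bp m, m 12%nat = bp -> agree m m0 [12;21]%nat -> (bp0 <= bp <= fp)%nat ->
     (forall a, (bp0 <= a < bp)%nat -> (hi < m0 a)%nat) ->
     (bp = fp \/ ((bp < fp)%nat /\ (m0 bp <= hi)%nat)) ->
     Good (Config 81 r m) (B + 8 * (fp - bp))) ->
  forall d bp m, d = (fp - bp)%nat -> m 12%nat = bp -> agree m m0 [12;21]%nat -> (bp0 <= bp <= fp)%nat ->
     (forall a, (bp0 <= a < bp)%nat -> (hi < m0 a)%nat) ->
     Good (Config 76 r m) (B + 8 * (fp - bp) + 3).
Proof.
  intros hi fp bp0 r m0 B E11 E13 E14 Hbp0 Hcont d.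
  induction d as [|d IH]; intros bp m Hd H12 Agm Hbp Hpass.
  - stp. eapply good_mono; [apply (Hcont bp m); auto; lia|lia].
  - stp. do 2 stp. destruct (Nat.leb_spec (m0 bp) hi).
    + eapply good_mono; [apply (Hcont bp _); simp_mem; auto; try lia; try agr|lia].
    + do 2 stp. eapply good_mono; [apply (IH (S bp)); simp_mem; try lia; try agr|lia].
      intros a Haa. destruct (Nat.eq_dec a bp); [subst; lia|]. apply Hpass; lia.
Qed.

Lemma lend_ok : forall (mS : nat -> nat) (r : nat -> R) (m : nat -> nat) l,
  SucOK mS 0 -> r 0%nat = path_cost cost (chain mS 0) -> OPT 0 (r 0%nat) ->
  m 3%nat = (3 + l)%nat -> m 4%nat = 1%nat -> m 5%nat = (n + 100)%nat ->
  skipn l (chain mS 0) = [n] ->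
  (forall x, (1 <= x <= 3)%nat -> (x <= l)%nat -> m (n + 100 - x)%nat = nth x (chain mS 0) 0%nat) ->
  (forall x, (4 <= x <= l)%nat -> m (2 + x)%nat = nth x (chain mS 0) 0%nat) ->
  Good (Config 149 r m) 12.
Proof.
  intros mS r m l Hs Hr0 Hopt H3 H4 H5 Hsk Hst Hwr.
  do 12 stp. apply good_halt; [reflexivity|].
  assert (HL := skipn_len1 _ _ _ Hsk).
  assert (Hp : is_path_from n 0 (chain mS 0)) by (apply (chain_path n mS 0); auto; lia).
  unfold Final, out_path, out_cost. cbn [nm rm pc]. simp_mem.
  replace (3 + l - 3)%nat with l by lia.
  rewrite (map_seq_nth _ (chain mS 0) (S l)); auto.
  - split; [exact Hp|]. split; [auto|]. intros s Hs'. rewrite <- Hr0. apply Hopt. exact Hs'.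
  - intros x Hx. cbv beta.
    destruct x as [|[|[|[|x]]]]; simp_mem.
    + destruct (chain_hd n mS 0) as [t Ht]. rewrite Ht. reflexivity.
    + apply Hst; lia.
    + apply Hst; lia.
    + apply Hst; lia.
    + apply Hwr; lia.
Qed.

Lemma trav_loop : forall (mS : nat -> nat) (r : nat -> R),
  SucOK mS 0 -> r 0%nat = path_cost cost (chain mS 0) -> OPT 0 (r 0%nat) ->
  forall d c l m, d = (n - c)%nat ->
  m 0%nat = n -> m 2%nat = c -> m 3%nat = (3 + l)%nat -> m 4%nat = 1%nat -> m 5%nat = (n + 100)%nat ->
  (3 <= l <= c)%nat -> (c <= n)%nat ->
  (forall x j, x = (n + 100 + j)%nat -> (j < n)%nat -> m x = mS x) ->
  skipn l (chain mS 0) = chain mS c ->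
  (forall x, (1 <= x <= 3)%nat -> m (n + 100 - x)%nat = nth x (chain mS 0) 0%nat) ->
  (forall x, (4 <= x <= l)%nat -> m (2 + x)%nat = nth x (chain mS 0) 0%nat) ->
  Good (Config 143 r m) (6 * (n - c) + 13).
Proof.
  intros mS r Hs Hr0 Hopt d. induction d as [d IH] using lt_wf_ind.
  intros c l m Hd H0 H2 H3 H4 H5 Hl Hc Hsm Hsk Hst Hwr.
  stp. destruct (Nat.leb_spec n c).
  - assert (Ecn : c = n) by lia. rewrite Ecn in *.
    eapply good_mono; [apply (lend_ok mS r m l); auto|lia].
    all: try (rewrite Hsk; apply chain_n). all: try (intros; apply Hst; lia).
  - unfold SB in *. pose proof (Hs c ltac:(lia)) as Hc'.
    do 2 stp. rewrite (Hsm (c + (n + 100))%nat c) by lia.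
    replace (c + (n + 100))%nat with (SB n + c)%nat by (unfold SB; lia).
    do 3 stp.
    assert (Hsk' : skipn (S l) (chain mS 0) = chain mS (mS (SB n + c)%nat)).
    { rewrite (chain_cons n mS 0 c Hs) in Hsk by lia. eapply skipn_S_cons; eauto. }
    assert (Hnth : nth (S l) (chain mS 0) 0%nat = mS (SB n + c)%nat).
    { rewrite nth_hd_skipn, Hsk'. destruct (chain_hd n mS (mS (SB n + c)%nat)) as [t Ht].
      rewrite Ht. reflexivity. }
    unfold SB in Hc'.
    eapply good_mono; [apply (IH (n - mS (SB n + c))%nat) with (c := mS (SB n + c)%nat) (l := S l);
      unfold SB in *; simp_mem; auto; try lia | unfold SB in *; lia].
    + intros x j -> Hj. simp_mem. apply Hsm with j; lia.
    + intros x Hx. simp_mem. apply Hst; lia.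
    + intros x Hx. destruct (Nat.eq_dec x (S l)).
      * subst x. simp_mem. rewrite Hnth. unfold SB. f_equal; lia.
      * simp_mem. apply Hwr; lia.
Qed.

Lemma trav_start : forall (r : nat -> R) (m : nat -> nat),
  m 0%nat = n -> m 26%nat = BS -> m 28%nat = (n + 100)%nat -> m 30%nat = 0%nat ->
  SucOK m 0 -> r BS = path_cost cost (chain m 0) -> OPT 0 (r BS) ->
  Good (Config 118 r m) (6 * n + 80).
Proof.
  intros r m H0 H26 H28 H30 Hs Hr Hopt.
  do 6 stp.
  pose proof (Hs 0%nat ltac:(lia)) as Hc1. unfold SB in Hc1.
  assert (HP1 : skipn 1 (chain m 0) = chain m (m (n + 100 + 0)%nat)).
  { rewrite (chain_cons n m 0 0 Hs) by lia. reflexivity. }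
  do 4 stp. replace (0 + (n + 100))%nat with (n + 100 + 0)%nat by lia.
  set (c1 := m (n + 100 + 0)%nat) in *.
  assert (Hn1 : nth 1 (chain m 0) 0%nat = c1).
  { rewrite nth_hd_skipn, HP1. destruct (chain_hd n m c1) as [t Ht]. rewrite Ht. reflexivity. }
  stp. stp. destruct (Nat.leb_spec n c1).
  { eapply good_mono; [apply (lend_ok m _ _ 1); simp_mem; auto; try lia|lia].
    all: try (rewrite <- Hr; exact Hopt).
    - rewrite HP1. replace c1 with n by lia. apply chain_n.
    - intros x Hx Hx'. assert (x = 1%nat) by lia. subst x. simp_mem. auto. }
  pose proof (Hs c1 ltac:(lia)) as Hc2. unfold SB in Hc2.
  do 2 stp. replace (c1 + (n + 100))%nat with (n + 100 + c1)%nat by lia.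
  set (c2 := m (n + 100 + c1)%nat) in *.
  assert (HP2 : skipn 2 (chain m 0) = chain m c2).
  { rewrite (chain_cons n m 0 c1 Hs) in HP1 by lia. eapply skipn_S_cons; eauto. }
  assert (Hn2 : nth 2 (chain m 0) 0%nat = c2).
  { rewrite nth_hd_skipn, HP2. destruct (chain_hd n m c2) as [t Ht]. rewrite Ht. reflexivity. }
  do 5 stp. destruct (Nat.leb_spec n c2).
  { eapply good_mono; [apply (lend_ok m _ _ 2); simp_mem; auto; try lia|lia].
    all: try (rewrite <- Hr; exact Hopt).
    - rewrite HP2. replace c2 with n by lia. apply chain_n.
    - intros x Hx Hx'. assert (x = 1%nat \/ x = 2%nat) as [E|E] by lia; subst x; simp_mem; auto. }
  pose proof (Hs c2 ltac:(lia)) as Hc3. unfold SB in Hc3.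
  do 2 stp. replace (c2 + (n + 100))%nat with (n + 100 + c2)%nat by lia.
  set (c3 := m (n + 100 + c2)%nat) in *.
  assert (HP3 : skipn 3 (chain m 0) = chain m c3).
  { rewrite (chain_cons n m 0 c2 Hs) in HP2 by lia. eapply skipn_S_cons; eauto. }
  assert (Hn3 : nth 3 (chain m 0) 0%nat = c3).
  { rewrite nth_hd_skipn, HP3. destruct (chain_hd n m c3) as [t Ht]. rewrite Ht. reflexivity. }
  do 4 stp.
  eapply good_mono; [eapply (trav_loop m _ _ _ _ (n - c3) c3 3) | lia].
  all: simp_mem; auto; try lia.
  all: try (rewrite <- Hr; exact Hopt).
  - intros x j -> Hj. simp_mem. auto.
  - intros x Hx. assert (x = 1%nat \/ x = 2%nat \/ x = 3%nat) as [E|[E|E]] by lia;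
      subst x; simp_mem; auto.
  Unshelve. all: simp_mem; auto. all: rewrite <- Hr; exact Hopt.
Qed.

Lemma stage_F : forall i hi bp fp (r0 : nat -> R) (m0 : nat -> nat) (r : nat -> R) (m : nat -> nat) jb best,
  INVB i hi bp fp r0 m0 -> agree r r0 [2;3]%nat -> agree m m0 [20;23]%nat ->
  m 23%nat = jb -> r 2%nat = best -> (i < jb <= n)%nat ->
  best = r0 (BU + jb)%nat + alpha * Rmax (Tsp i - Tsp jb - Qcap) 0 ->
  (forall j, (i < j <= n)%nat -> best <= r0 (BU + j)%nat + alpha * Rmax (Tsp i - Tsp j - Qcap) 0) ->
  ((0 < i)%nat -> forall hi bp fp r m, INV (i - 1) hi bp fp r m -> Good (Config 23 r m) (Bud (i - 1) hi bp fp)) ->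
  Good (Config 103 r m) (BF i hi bp fp).
Proof.
  intros i hi bp fp r0 m0 r m jb best HB Agr Agm H23 H2 Hjb Hbest Hmin Hnext.
  destruct HB. unfold BF.
  do 2 stp. lk3 binp0 (S i) 2%nat. do 3 stp. lk bE0 (S i). do 5 stp.
  set (sval := best + dout (S i) + Esp (S i)) in *.
  match goal with |- Good (Config _ ?R ?M) _ => set (r' := R) in *; set (m' := M) in * end.
  assert (Ar' : agree r' r0 [2; 3; (7 * n + 14 + i)]%nat) by (subst r'; agr).
  assert (Am' : agree m' m0 [20; 23; (n + 100 + i)]%nat) by (subst m'; agr).
  assert (Er' : r' (7 * n + 14 + i)%nat = sval) by (subst r'; simp_mem; auto).
  assert (Em' : m' (n + 100 + i)%nat = jb) by (subst m'; simp_mem; auto).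
  clearbody r' m'.
  assert (Hsuc : SucOK m' i).
  { intros j Hj. unfold SB. destruct (Nat.eq_dec j i).
    - subst j. rewrite Em'. lia.
    - simp_mem. apply bsuc0. lia. }
  assert (Hch : forall j, (S i <= j <= n)%nat -> chain m' j = chain m0 j).
  { intros j Hj. apply (chain_ext n m0 m' (S i) bsuc0); auto.
    intros j' Hj'. unfold SB. simp_mem. auto. }
  assert (Hval : sval = path_cost cost (chain m' i)).
  { rewrite (chain_cost n Qcap alpha q dn dout din m' i i Hsuc) by lia. unfold SB. rewrite Em'.
    rewrite Hch by lia. destruct (bS0 _ jb eq_refl ltac:(lia)) as [Hs _]. rewrite <- Hs.
    rewrite (cost_eq n) by lia. rewrite (bU0 _ jb eq_refl ltac:(lia)) in Hbest. unfold sval. lra. }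
  assert (Hopt : OPT i sval).
  { unfold sval. replace (best + dout (S i) + Esp (S i)) with (dout (S i) + Esp (S i) + best) by ring.
    apply OPT_step with (Sv := fun j => r0 (BS + j)%nat) (U := fun j => r0 (BU + j)%nat).
    - lia.
    - intros j Hj. apply (bS0 _ j eq_refl). lia.
    - intros j Hj. apply (bU0 _ j eq_refl). lia.
    - auto. }
  stp. destruct (Nat.leb_spec i 0).
  - assert (Ei : i = 0%nat) by lia. rewrite Ei in Hsuc, Er', Hval, Hopt.
    rewrite Nat.add_0_r in Er'.
    eapply good_mono; [apply trav_start; simp_mem; auto|lia].
    all: try exact Hsuc. all: rewrite Er'; auto.
  - do 4 stp. eapply good_mono; [apply (Hnext ltac:(lia) hi bp fp)|unfold Bud; lia].
    constructor; simp_mem; try lia; try reflexivity.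
    + intros x b o -> Hb Ho. simp_mem. apply binp0; lia.
    + intros x j -> Hj. simp_mem. apply bT0; lia.
    + intros x j -> Hj. simp_mem. apply bE0; lia.
    + intros x j -> Hj. destruct (Nat.eq_dec j i).
      * subst j. simp_mem.
        rewrite (chain_ext n m' _ i Hsuc); [split; auto | intros; unfold SB; simp_mem; auto | lia].
      * simp_mem. rewrite (chain_ext n m' _ i Hsuc); [ | intros; unfold SB; simp_mem; auto | lia].
        rewrite Hch by lia. apply bS0; lia.
    + intros x j -> Hj. simp_mem. apply bU0; lia.
    + replace (S (i - 1)) with i by lia. intros j Hj. unfold SB. simp_mem. apply Hsuc. lia.
    + apply (RestF_ext _ _ _ r0). intros j Hj. simp_mem. auto. simp_mem. auto.
    + intros j Hj. replace (S (i - 1)) with i by lia. apply bwin0. lia.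
    + replace (S (S (i - 1))) with (S i) by lia. apply (DQ_ext _ _ _ _ r0 _ m0).
      * intros a Haa. simp_mem. auto.
      * intros j Hj. simp_mem. auto.
      * auto.
Qed.

Lemma pen_win : forall i j, Tsp i <= Tsp j + Qcap -> Rmax (Tsp i - Tsp j - Qcap) 0 = 0.
Proof. intros. apply Rmax_right. lra. Qed.
Lemma pen_rest : forall i j, Tsp j + Qcap < Tsp i -> Rmax (Tsp i - Tsp j - Qcap) 0 = Tsp i - Tsp j - Qcap.
Proof. intros. apply Rmax_left. lra. Qed.

Lemma win_min : forall lo hi bp fp r m, (lo <= hi)%nat -> DQ lo hi bp fp r m ->
  (bp < fp)%nat /\ (lo <= m bp <= hi)%nat /\ forall j, (lo <= j <= hi)%nat -> r (BU + m bp)%nat <= r (BU + j)%nat.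
Proof.
  intros lo hi bp fp r m Hl [A [B C]].
  destruct (C lo ltac:(lia)) as [a0 [Ha0 _]].
  split; [lia|]. split; [apply A; lia|].
  intros j Hj. destruct (C j Hj) as [a [Ha1 [Ha2 Ha3]]].
  destruct (Nat.eq_dec a bp); [subst; auto|].
  destruct (B bp a ltac:(lia) ltac:(lia) ltac:(lia)) as [_ H]. lra.
Qed.

Lemma stage_B : forall i hi bp fp (r : nat -> R) (m : nat -> nat),
  INVB i hi bp fp r m ->
  ((0 < i)%nat -> forall hi bp fp r m, INV (i - 1) hi bp fp r m -> Good (Config 23 r m) (Bud (i - 1) hi bp fp)) ->
  Good (Config 81 r m) (BB i hi bp fp).
Proof.
  intros i hi bp fp r m HB Hnext.
  introB HB. unfold BB, BF.
  stp. destruct (Nat.leb_spec (S i) hi) as [Hw|Hw].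
  - destruct (win_min _ _ _ _ _ _ Hw Xdq) as [Hbf [Hjb Hwm]].
    do 4 stp. destruct (Nat.leb_spec n hi).
    + do 2 stp.
      eapply good_mono; [eapply stage_F with (i := i) (hi := hi) (bp := bp) (fp := fp) (r0 := r) (m0 := m) (jb := (m bp)) | unfold BF; lia].
      all: try eassumption. all: simp_mem; try agr; try reflexivity; try lia.
      * rewrite pen_win by (apply Xwin2; lia). ring.
      * intros j Hj.
        rewrite (pen_win i j) by (apply Xwin2; lia). specialize (Hwm j ltac:(lia)). lra.
    + do 6 stp. lk XT i.
      destruct (Xrest ltac:(lia)) as [Hjr [Hr4 Hrm]]. rewrite Hr4. unfold Vv in *.
      destruct (Rle_dec _ _) as [Hc|Hc].
      * do 2 stp.
        eapply good_mono; [eapply stage_F with (i := i) (hi := hi) (bp := bp) (fp := fp) (r0 := r) (m0 := m) (jb := (m bp)) | unfold BF; lia].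
        all: try eassumption. all: simp_mem; try agr; try reflexivity; try lia.
        -- rewrite pen_win by (apply Xwin2; lia). ring.
        -- intros j Hj.
           destruct (le_lt_dec j hi).
           ++ rewrite (pen_win i j) by (apply Xwin2; lia). specialize (Hwm j ltac:(lia)). lra.
           ++ rewrite (pen_rest i j) by (apply Xwin; lia). specialize (Hrm j ltac:(lia)).
              nra.
      * do 3 stp.
        eapply good_mono; [eapply stage_F with (i := i) (hi := hi) (bp := bp) (fp := fp) (r0 := r) (m0 := m) (jb := (m 22%nat)) | unfold BF; lia].
        all: try eassumption. all: simp_mem; try agr; try reflexivity; try lia.
        -- rewrite pen_rest by (apply Xwin; lia). ring.
        -- intros j Hj.
           destruct (le_lt_dec j hi).
           ++ rewrite (pen_win i j) by (apply Xwin2; lia). specialize (Hwm j ltac:(lia)). nra.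
           ++ rewrite (pen_rest i j) by (apply Xwin; lia). specialize (Hrm j ltac:(lia)). nra.
  - assert (Hh : hi = i) by lia. rewrite Hh in *.
    do 1 stp. do 5 stp. lk XT i.
    destruct (Xrest ltac:(lia)) as [Hjr [Hr4 Hrm]]. rewrite Hr4. unfold Vv in *.
    do 2 stp.
    eapply good_mono; [eapply stage_F with (i := i) (hi := i) (bp := bp) (fp := fp) (r0 := r) (m0 := m) (jb := (m 22%nat)) | unfold BF; lia].
    all: try eassumption. all: simp_mem; try agr; try reflexivity; try lia.
    -- rewrite pen_rest by (apply Xwin; lia). ring.
    -- intros j Hj.
       rewrite (pen_rest i j) by (apply Xwin; lia). specialize (Hrm j ltac:(lia)). nra.
Qed.

Lemma DQ_shrink : forall lo hi hi' bp bp' fp r m, DQ lo hi bp fp r m -> (hi' <= hi)%nat ->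
  (bp <= bp' <= fp)%nat -> (forall a, (bp <= a < bp')%nat -> (hi' < m a)%nat) ->
  (bp' = fp \/ ((bp' < fp)%nat /\ (m bp' <= hi')%nat)) -> DQ lo hi' bp' fp r m.
Proof.
  intros lo hi hi' bp bp' fp r m [A [B C]] Hh Hb Hp He. split; [|split].
  - intros a Haa. pose proof (A a ltac:(lia)). destruct He as [He|[He1 He2]]; [lia|].
    destruct (Nat.eq_dec a bp'); [subst; lia|].
    destruct (B bp' a ltac:(lia) ltac:(lia) ltac:(lia)). lia.
  - intros a a' H1 H2 H3. apply B; lia.
  - intros j Hj. destruct (C j ltac:(lia)) as [a [Ha1 [Ha2 Ha3]]].
    destruct (le_lt_dec bp' a).
    + exists a. split; [lia|auto].
    + pose proof (Hp a ltac:(lia)). lia.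
Qed.

Ltac introA HA :=
  pose proof (a0 _ _ _ _ _ _ HA); pose proof (a10 _ _ _ _ _ _ HA); pose proof (a29 _ _ _ _ _ _ HA);
  pose proof (a16 _ _ _ _ _ _ HA); pose proof (a11 _ _ _ _ _ _ HA); pose proof (a12 _ _ _ _ _ _ HA);
  pose proof (a13 _ _ _ _ _ _ HA); pose proof (a14 _ _ _ _ _ _ HA); pose proof (a15 _ _ _ _ _ _ HA);
  pose proof (a18 _ _ _ _ _ _ HA); pose proof (a19 _ _ _ _ _ _ HA); pose proof (a24 _ _ _ _ _ _ HA);
  pose proof (a25 _ _ _ _ _ _ HA); pose proof (a26 _ _ _ _ _ _ HA); pose proof (a27 _ _ _ _ _ _ HA);
  pose proof (a28 _ _ _ _ _ _ HA); pose proof (a30 _ _ _ _ _ _ HA); pose proof (ar0 _ _ _ _ _ _ HA);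
  pose proof (ar1 _ _ _ _ _ _ HA);
  pose proof (arng _ _ _ _ _ _ HA) as Yrng; pose proof (adq0 _ _ _ _ _ _ HA) as Ydq0;
  pose proof (ainp _ _ _ _ _ _ HA) as Yinp; pose proof (aT _ _ _ _ _ _ HA) as YT;
  pose proof (aE _ _ _ _ _ _ HA) as YE; pose proof (aS _ _ _ _ _ _ HA) as YS;
  pose proof (aU _ _ _ _ _ _ HA) as YU; pose proof (asuc _ _ _ _ _ _ HA) as Ysuc;
  pose proof (arest _ _ _ _ _ _ HA) as Yrest; pose proof (awin _ _ _ _ _ _ HA) as Ywin;
  pose proof (adq _ _ _ _ _ _ HA) as Ydq.

Lemma stage_A : forall i hi bp fp (r : nat -> R) (m : nat -> nat),
  INVA i hi bp fp r m ->
  ((0 < i)%nat -> forall hi bp fp r m, INV (i - 1) hi bp fp r m -> Good (Config 23 r m) (Bud (i - 1) hi bp fp)) ->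
  Good (Config 56 r m) (BA i hi bp fp).
Proof.
  intros i hi bp fp r m HA Hnext. introA HA. unfold BA.
  replace (100 * i + 8 * (fp - bp) + 19 * (hi - i) + 6 * n + 138)%nat
    with ((100 * i + 8 * (fp - bp) + 6 * n + 131) + 19 * (hi - i) + 7)%nat by lia.
  eapply (hi_loop i hi r m); auto; try lia;
    [ | apply agree_refl | apply agree_refl
      | intros j Hj; apply Ywin in Hj; pose proof (Tsp_mono n q Hq i (S i) ltac:(lia) ltac:(lia)); lra ].
  intros hi' r' m' H11' Agm Agr Hhi Hwin Hrest Hexit.
  replace (100 * i + 8 * (fp - bp) + 6 * n + 131 + 19 * (hi' - i))%nat
    with ((100 * i + 19 * (hi' - i) + 6 * n + 128) + 8 * (fp - bp) + 3)%nat by lia.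
  refine (back_loop hi' fp bp r' m' _ _ _ _ _ _ (fp - bp) bp m' eq_refl _ _ _ _);
    [ auto | simp_mem; auto | simp_mem; auto | lia | | simp_mem; auto | apply agree_refl | lia | intros; lia ].
  intros bp' m'' H12' Agm2 Hbp Hpass Hexit2.
  eapply good_mono; [apply (stage_B i hi' bp' fp r' m''); auto|unfold BB, BF; lia].
  constructor; simp_mem; try lia; try reflexivity.
  - intros x b o -> Hb Ho. simp_mem. apply Yinp; lia.
  - intros x j -> Hj. simp_mem. apply YT; lia.
  - intros x j -> Hj. simp_mem. apply YE; lia.
  - intros x j -> Hj. simp_mem.
    rewrite (chain_ext n m m'' (S i) Ysuc); [apply YS; lia | intros; unfold SB; simp_mem; auto | lia].
  - intros x j -> Hj. simp_mem. apply YU; lia.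
  - intros j Hj. unfold SB. simp_mem. apply Ysuc. lia.
  - apply (RestF_ext _ _ _ r). intros j Hj. simp_mem. auto. auto.
  - exact Hwin.
  - intros j Hj. destruct Hexit as [He|[He1 He2]]; [lia|].
    pose proof (Tsp_mono n q Hq j hi' ltac:(lia) ltac:(lia)). lra.
  - apply (DQ_ext _ _ _ _ r _ m).
    + intros a Haa. simp_mem. auto.
    + intros j Hj. simp_mem. auto.
    + eapply DQ_shrink; [exact Ydq| lia | lia | |].
      * intros a Haa. specialize (Hpass a Haa). rewrite (Agm a) in Hpass by (unfold In; lia). auto.
      * destruct Hexit2 as [E|[E1 E2]]; [left; auto|right; split; auto].
        rewrite (Agm bp') in E2 by (unfold In; lia). auto.
Qed.

Lemma DQ_push : forall k hi bp fp fp' (r r' : nat -> R) (m m' : nat -> nat) uk,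
  DQ (S k) hi bp fp r m -> (k <= hi)%nat -> (bp <= fp' <= fp)%nat ->
  (forall a, (fp' <= a < fp)%nat -> uk <= r (BU + m a)%nat) ->
  (fp' = bp \/ ((bp < fp')%nat /\ r (BU + m (fp' - 1))%nat < uk)) ->
  m' fp' = k -> (forall a, (bp <= a < fp')%nat -> m' a = m a) ->
  r' (BU + k)%nat = uk -> (forall j, (S k <= j <= hi)%nat -> r' (BU + j)%nat = r (BU + j)%nat) ->
  DQ k hi bp (S fp') r' m'.
Proof.
  intros k hi bp fp fp' r r' m m' uk [A [B C]] Hk Hf Hpop Hex Hm1 Hm2 Hr1 Hr2. split; [|split].
  - intros a Haa. destruct (Nat.eq_dec a fp'); [subst; lia|]. rewrite Hm2 by lia.
    pose proof (A a ltac:(lia)). lia.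
  - intros a a' H1 H2 H3. rewrite (Hm2 a) by lia. pose proof (A a ltac:(lia)).
    destruct (Nat.eq_dec a' fp').
    + subst a'. rewrite Hm1, Hr1, Hr2 by lia. split; [lia|].
      destruct Hex as [Hex|[Hex1 Hex2]]; [lia|].
      destruct (Nat.eq_dec a (fp' - 1)%nat); [subst; lra|].
      destruct (B a (fp' - 1)%nat ltac:(lia) ltac:(lia) ltac:(lia)). lra.
    + rewrite (Hm2 a') by lia. pose proof (A a' ltac:(lia)). rewrite !Hr2 by lia. apply B; lia.
  - intros j Hj. destruct (Nat.eq_dec j k).
    + subst j. exists fp'. rewrite Hm1. split; [lia|]. split; [lia|lra].
    + destruct (C j ltac:(lia)) as [a [Ha1 [Ha2 Ha3]]]. pose proof (A a ltac:(lia)).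
      destruct (le_lt_dec fp' a).
      * exists fp'. rewrite Hm1, Hr1, (Hr2 j) by lia. split; [lia|]. split; [lia|].
        pose proof (Hpop a ltac:(lia)). lra.
      * exists a. rewrite Hm2 by lia. rewrite !Hr2 by lia. split; [lia|auto].
Qed.

Ltac introI HI :=
  pose proof (h0 _ _ _ _ _ _ HI); pose proof (h10 _ _ _ _ _ _ HI); pose proof (h29 _ _ _ _ _ _ HI);
  pose proof (h16 _ _ _ _ _ _ HI); pose proof (h11 _ _ _ _ _ _ HI); pose proof (h12 _ _ _ _ _ _ HI);
  pose proof (h13 _ _ _ _ _ _ HI); pose proof (h14 _ _ _ _ _ _ HI); pose proof (h15 _ _ _ _ _ _ HI);
  pose proof (h18 _ _ _ _ _ _ HI); pose proof (h19 _ _ _ _ _ _ HI); pose proof (h24 _ _ _ _ _ _ HI);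
  pose proof (h25 _ _ _ _ _ _ HI); pose proof (h26 _ _ _ _ _ _ HI); pose proof (h27 _ _ _ _ _ _ HI);
  pose proof (h28 _ _ _ _ _ _ HI); pose proof (h30 _ _ _ _ _ _ HI); pose proof (hr0 _ _ _ _ _ _ HI);
  pose proof (hr1 _ _ _ _ _ _ HI);
  pose proof (hrng _ _ _ _ _ _ HI) as Zrng; pose proof (hdq0 _ _ _ _ _ _ HI) as Zdq0;
  pose proof (hinp _ _ _ _ _ _ HI) as Zinp; pose proof (hT _ _ _ _ _ _ HI) as ZT;
  pose proof (hE _ _ _ _ _ _ HI) as ZE; pose proof (hS _ _ _ _ _ _ HI) as ZS;
  pose proof (hU _ _ _ _ _ _ HI) as ZU; pose proof (hsuc _ _ _ _ _ _ HI) as Zsuc;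
  pose proof (hrest _ _ _ _ _ _ HI) as Zrest; pose proof (hwin _ _ _ _ _ _ HI) as Zwin;
  pose proof (hdq _ _ _ _ _ _ HI) as Zdq.

Lemma stage_0 : forall i hi bp fp (r : nat -> R) (m : nat -> nat),
  INV i hi bp fp r m ->
  ((0 < i)%nat -> forall hi bp fp r m, INV (i - 1) hi bp fp r m -> Good (Config 23 r m) (Bud (i - 1) hi bp fp)) ->
  Good (Config 23 r m) (Bud i hi bp fp).
Proof.
  intros i hi bp fp r m HI Hnext. introI HI. unfold Bud.
  do 2 stp. lk3 Zinp (S i) 1%nat. do 3 stp. lk ZE (S (S i)). do 5 stp. lk3 Zinp (S i) 3%nat.
  do 6 stp.
  set (uk := din (S i) - (dn' (S i) + Esp (S (S i))) + r (BS + S i)%nat) in *.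
  match goal with |- Good (Config _ ?R ?M) _ => set (r1 := R) in *; set (m1 := M) in * end.
  assert (Ar1 : agree r1 r [2; 3; (BE + S i); (BU + S i)]%nat) by (subst r1; agr).
  assert (Am1 : agree m1 m [20]%nat) by (subst m1; agr).
  assert (Er1 : r1 (BU + S i)%nat = uk) by (subst r1; simp_mem; auto).
  assert (Er1' : r1 (BE + S i)%nat = dn' (S i) + Esp (S (S i))) by (subst r1; simp_mem; auto).
  assert (Er13 : r1 3%nat = uk) by (subst r1; simp_mem; auto).
  clearbody r1 m1.
  replace (100 * S i + 8 * (fp - bp) + 19 * (hi - i) + 6 * n + 80 - 1 - 1 - 1 - 1 - 1 - 1 - 1 - 1
           - 1 - 1 - 1 - 1 - 1 - 1 - 1 - 1)%nat
    with ((100 * i + 19 * (hi - i) + 6 * n + 154) + 8 * (fp - bp) + 7 + 3)%nat by lia.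
  eapply good_mono; [|instantiate (1 := ((100 * i + 19 * (hi - i) + 6 * n + 154) + 8 * (fp - bp) + 7)%nat); lia].
  refine (push_loop hi bp fp r1 m1 uk _ _ _ fp r1 m1 _ _ _ _ _ _ _ _ _);
    [ | lia | simp_mem; auto | simp_mem; auto | simp_mem; auto | simp_mem; auto | auto
      | apply agree_refl | apply agree_refl | lia | intros; lia ].
  intros fp' r2 m2 H13' H12' H14' H24' H3' Agm Agr Hfp Hpop Hex.
  do 5 stp. lk ZT (S i). lk3 Zinp (S i) 0%nat. do 3 stp.
  eapply good_mono; [apply (stage_A i hi bp (S fp')); auto|unfold BA; lia].
  assert (Hdqm : forall a, (DQ0 <= a)%nat -> m1 a = m a).
  { intros a Haa. rewrite Am1 by (unfold In; lia). auto. }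
  assert (Hdqr : forall j, (S (S i) <= j <= n)%nat -> r1 (BU + j)%nat = r (BU + j)%nat).
  { intros j Hj. rewrite Ar1 by (unfold In; lia). auto. }
  pose proof (Tsp_S n q i ltac:(lia)) as HTS. pose proof (Esp_S n dn (S i) ltac:(lia)) as HES.
  constructor; simp_mem; try lia; try reflexivity.
  - intros x b o -> Hb Ho. simp_mem. apply Zinp; lia.
  - intros x j -> Hj. destruct (Nat.eq_dec j i).
    + subst j. simp_mem. lra.
    + simp_mem. apply ZT; lia.
  - intros x j -> Hj. destruct (Nat.eq_dec j (S i)).
    + subst j. simp_mem. try rewrite Er1'. lra.
    + simp_mem. apply ZE; lia.
  - intros x j -> Hj. simp_mem.
    rewrite (chain_ext n m _ (S i) Zsuc); [apply ZS; lia | intros; unfold SB; simp_mem; auto | lia].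
  - intros x j -> Hj. destruct (Nat.eq_dec j (S i)).
    + subst j. simp_mem. try rewrite Er1. unfold uk. rewrite HES. ring.
    + simp_mem. apply ZU; lia.
  - intros j Hj. unfold SB. simp_mem. apply Zsuc. lia.
  - apply (RestF_ext _ _ _ r). intros j Hj. simp_mem. auto. auto.
  - exact Zwin.
  - apply (DQ_push (S i) hi bp fp fp' r _ m _ uk Zdq ltac:(lia) ltac:(lia)).
    + intros a Haa. specialize (Hpop a Haa). rewrite Hdqm in Hpop by lia.
      pose proof (proj1 Zdq a ltac:(lia)). rewrite Hdqr in Hpop by lia. auto.
    + destruct Hex as [E|[E1 E2]]; [left; auto|right; split; auto].
      rewrite Hdqm in E2 by lia. pose proof (proj1 Zdq (fp' - 1)%nat ltac:(lia)).
      rewrite Hdqr in E2 by lia. auto.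
    + simp_mem. auto.
    + intros a Haa. simp_mem. auto.
    + simp_mem. auto.
    + intros j Hj. simp_mem. auto.
Qed.

Lemma main_loop : forall i hi bp fp r m, INV i hi bp fp r m -> Good (Config 23 r m) (Bud i hi bp fp).
Proof.
  induction i as [|i IH]; intros hi bp fp r m HI.
  - apply stage_0; auto. intros; lia.
  - apply stage_0; auto. intros _. replace (S i - 1)%nat with i by lia. auto.
Qed.

Lemma init_ok : Good (init_config n Qcap alpha q dn dout din) (23 + Bud (n - 1) n DQ0 DQ0).
Proof.
  unfold init_config. do 23 stp.
  eapply good_mono; [apply (main_loop (n-1) n DQ0 DQ0)|lia].
  constructor; simp_mem; try lia; try reflexivity.
  - intros x b o -> Hb Ho. rewrite inp_blk by lia. destruct o as [|[|[|[|o]]]]; auto; lia.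
  - intros x j -> Hj. assert (j = n) by lia. subst. rewrite inp_high by lia. rewrite Tsp_n. auto.
  - intros x j -> Hj. assert (j = S n) by lia. subst. rewrite inp_high by lia. rewrite Esp_Sn. auto.
  - intros x j -> Hj. assert (j = n) by lia. subst. rewrite inp_high by lia. rewrite chain_n.
    split; [reflexivity| apply OPT_n].
  - intros j Hj. lia.
  - intros Hc. lia.
  - split; [|split]; intros; try lia.
Qed.

End Alg.

Theorem mainTheorem4 :
  exists (prog : list instr) (C : nat),
  forall (n : nat) (Qcap alpha : R) (q dn dout din : nat -> R),
    (1 <= n)%nat ->
    0 <= Qcap -> 0 <= alpha ->
    (forall i, (1 <= i <= n)%nat -> 0 <= q i) ->
    exists t : nat,
      (t <= C * n)%nat /\
      let fin := exec prog t (init_config n Qcap alpha q dn dout din) in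
      step prog fin = None /\
      is_path n (out_path fin) /\
      out_cost fin = path_cost (arc_cost Qcap alpha q dn dout din) (out_path fin) /\
      (forall s, is_path n s ->
         path_cost (arc_cost Qcap alpha q dn dout din) (out_path fin)
         <= path_cost (arc_cost Qcap alpha q dn dout din) s).
Proof.
  exists prog, 230%nat. intros n Qcap alpha q dn dout din Hn HQ Ha Hq.
  pose proof (init_ok n Qcap alpha q dn dout din) as HI.
  repeat match type of HI with ?A -> _ => specialize (HI ltac:(assumption)) end.
  destruct HI as [t [Ht [H1 [H2 [H3 H4]]]]].
  exists t. split.
  - unfold Bud in Ht. lia.
  - simpl. split; [exact H1|]. split; [exact H2|]. split; [exact H3|exact H4].
Qed.
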